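(* Let $M$ be a real symmetric matrix whose induced signed graph $\Gamma=(G,\sigma)$, $G=(V,E)$, is connected, and let $f$ be an eigenfunction of $M$ for an eigenvalue $\lambda$. Let $D_1,\dots,D_m$ be the weak nodal domains of $f$, and for each $i$ let $g_i(x)=f(x)$ if $x\in D_i$ and $g_i(x)=0$ otherwise. If $g=\sum_{i=1}^m a_ig_i$ with $a_1,\dots,a_m\in\mathbb R$ is an eigenfunction of $M$ for $\lambda$, then $a_1=a_2=\cdots=a_m$.
   Context: The induced signed graph of a real symmetric $n\times n$ matrix $M$ has vertices $x_1,\dots,x_n$, edge $\{x_i,x_j\}$ iff $i\ne j$ and $M_{ij}\ne0$, sign $\sigma_{x_ix_j}=-M_{ij}/|M_{ij}|$. Eigenfunctions are nonzero eigenvectors viewed as functions on $V$. A walk is $y_1,\dots,y_m$ ($m\ge2$) with consecutive vertices adjacent. A W-walk of $f$ is a walk such that for any two consecutive nonzeros $y_i,y_j$ along it ($i<j$, $f(y_i)\ne0\ne f(y_j)$, $f(y_l)=0$ for $i<l<j$) one has $f(y_i)\sigma_{y_iy_{i+1}}\cdots\sigma_{y_{j-1}y_j}f(y_j)>0$. On $\Omega=\{x:f(x)\ne0\}$ the relation ''$x=y$ or a W-walk connects $x$ and $y$'' is an equivalence relation with classes $W_1,\dots,W_q$; the weak nodal domains of $f$ are the induced subgraphs on $W_i^0=W_i\cup\{x\in V:\text{there is a W-walk from } x \text{ to some vertex of } W_i\}$ (membership $x\in D_i$ refers to the vertex set). *)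

(* Defs.v *)
From HB Require Import structures.
From mathcomp Require Import all_boot all_order all_algebra fingraph.
From mathcomp Require Import boolp reals.
Set Implicit Arguments. Unset Strict Implicit. Unset Printing Implicit Defensive.
Import Order.TTheory GRing.Theory Num.Theory.
Local Open Scope ring_scope.

Section SignedGraph.
Variables (R : realType) (n : nat) (M : 'M[R]_n).

Definition adj : rel 'I_n := fun i j => (i != j) && (M i j != 0).

(* sign sigma_{x_i x_j} = - M_ij / |M_ij| (only meaningful on edges) *)
Definition sgn (i j : 'I_n) : R := - (M i j / `|M i j|).

Variable f : 'cV[R]_n.
Definition fv (x : 'I_n) : R := f x 0.

(* a walk y_1, ..., y_m (m >= 2) is represented as x :: s with s nonempty *)
Definition is_walk (x : 'I_n) (s : seq 'I_n) : bool :=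
  (0 < size s)%N && path adj x s.

Definition W_cond (x : 'I_n) (s : seq 'I_n) : Prop :=
  let w := x :: s in
  forall i j : nat, (i < j < size w)%N ->
    fv (nth x w i) != 0 -> fv (nth x w j) != 0 ->
    (forall l : nat, (i < l < j)%N -> fv (nth x w l) = 0) ->
    0 < fv (nth x w i) * (\prod_(i <= k < j) sgn (nth x w k) (nth x w k.+1))
          * fv (nth x w j).

Definition W_walk (x : 'I_n) (s : seq 'I_n) : Prop := is_walk x s /\ W_cond x s.

Definition W_conn (x y : 'I_n) : Prop :=
  exists s : seq 'I_n, W_walk x s /\ last x s = y.

Definition Omega : {set 'I_n} := [set x | fv x != 0].

Definition W_class (x : 'I_n) : {set 'I_n} :=
  [set y | (fv y != 0) && `[< y = x \/ W_conn x y >]].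

Definition W_classes : {set {set 'I_n}} := [set W_class x | x in Omega].

Definition weak_domain (W : {set 'I_n}) : {set 'I_n} :=
  W :|: [set x | `[< exists y, y \in W /\ W_conn x y >]].

Definition restr (D : {set 'I_n}) : 'cV[R]_n :=
  \col_i (if i \in D then f i 0 else 0).

End SignedGraph.

Definition eigenfunction (R : realType) (n : nat) (M : 'M[R]_n) (lam : R)
  (f : 'cV[R]_n) : Prop := f != 0 /\ M *m f = lam *: f.

(* Main.v *)
Require Import Defs.
From HB Require Import structures.
From mathcomp Require Import all_boot all_order all_algebra fingraph.
From mathcomp Require Import boolp reals.
From mathcomp Require Import zify ring lra.
Import Order.TTheory GRing.Theory Num.Theory.
Local Open Scope ring_scope.
Set Implicit Arguments. Unset Strict Implicit. Unset Printing Implicit Defensive.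

Section S.
Variables (R : realType) (n : nat) (M : 'M[R]_n) (f : 'cV[R]_n).
Hypothesis Msym : M^T = M.

Lemma Msym' i j : M i j = M j i.
Proof. by rewrite -{1}Msym mxE. Qed.

Lemma adj_sym : symmetric (adj M).
Proof. by move=> i j; rewrite /adj eq_sym Msym'. Qed.

Lemma sgn_sym x y : sgn M x y = sgn M y x.
Proof. by rewrite /sgn Msym'. Qed.

Local Notation fv := (fv f).

Definition Wc (d : 'I_n) (w : seq 'I_n) : Prop := forall i j : nat, (i < j < size w)%N ->
    fv (nth d w i) != 0 -> fv (nth d w j) != 0 ->
    (forall l : nat, (i < l < j)%N -> fv (nth d w l) = 0) ->
    0 < fv (nth d w i) * (\prod_(i <= k < j) sgn M (nth d w k) (nth d w k.+1))
          * fv (nth d w j).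

Lemma WcE x s : W_cond M f x s <-> Wc x (x :: s).
Proof. by []. Qed.

Lemma Wc_def d d' w : Wc d w -> Wc d' w.
Proof.
move=> H i j /andP[ij jw] ni nj hl.
have E k : (k < size w)%N -> nth d' w k = nth d w k by move=> kw; apply: set_nth_default.
have jw' : (i < j < size w)%N by rewrite ij jw.
rewrite !E ?(ltn_trans ij) //.
rewrite (eq_big_nat _ _ (F2 := fun k => sgn M (nth d w k) (nth d w k.+1))); last first.
  move=> k /andP[_ kj]; rewrite !E //; [exact: leq_ltn_trans kj jw | exact: ltn_trans kj jw].
apply: H => //; first by rewrite -E ?(ltn_trans ij).
  by rewrite -E.
move=> l /andP[il lj]; rewrite -E; first by apply: hl; rewrite il lj.
exact: ltn_trans lj jw.
Qed.

Lemma prod_rev (F G : nat -> R) N i j : (j < N)%N -> (i <= j)%N ->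
  (forall k, (i <= k < j)%N -> F k = G (N - k.+2)%N) ->
  \prod_(i <= k < j) F k = \prod_(N - j.+1 <= k < N - i.+1) G k.
Proof.
elim: j => [|j IH] jN ij hF.
  have -> : i = 0%N by lia.
  by rewrite !big_geq.
case: (ltngtP i j.+1) => [ij'|ji|->]; last by rewrite !big_geq.
  2: by exfalso; lia.
rewrite big_nat_recr //= (@big_ltn _ _ _ (N - j.+2)); last by lia.
have -> : (N - j.+2).+1 = (N - j.+1)%N by lia.
rewrite IH //.
- by rewrite hF; [exact: mulrC | lia].
- by lia.
- by move=> k /andP[ik kj]; apply: hF; rewrite ik /= ltnS ltnW.
Qed.

Lemma Wc_rev d w : Wc d w -> Wc d (rev w).
Proof.
move=> H i j; rewrite size_rev => /andP[ij jN] ni nj hl.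

have iN : (i < size w)%N by timeout 20 lia.
rewrite !nth_rev // in ni nj *.
rewrite (@prod_rev _ (fun k => sgn M (nth d w k) (nth d w k.+1)) (size w) i j) //; last first.
- move=> k /andP[ik kj]; rewrite !nth_rev; try timeout 20 lia.
  have -> : (((size w) - k.+2).+1 = (size w) - k.+1)%N by timeout 20 lia.
  by rewrite sgn_sym.
- by timeout 20 lia.
have := H ((size w) - j.+1)%N ((size w) - i.+1)%N.
have -> : ((size w) - j.+1 < (size w) - i.+1 < (size w))%N by timeout 20 lia.
move=> /(_ isT nj ni) H'.
have: 0 < fv (nth d w ((size w) - j.+1)) *
      (\prod_((size w) - j.+1 <= i0 < (size w) - i.+1) sgn M (nth d w i0) (nth d w i0.+1)) *
      fv (nth d w ((size w) - i.+1)).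
  apply: H' => l /andP[l1 l2].
  have := hl ((size w) - l.+1)%N; rewrite nth_rev; last by timeout 20 lia.
  have -> : ((size w) - ((size w) - l.+1).+1 = l)%N by timeout 20 lia.
  by apply; timeout 20 lia.
by move=> h; set P := (\prod_(_ <= _ < _) _); set a := fv (nth d w _); set b := fv (nth d w (size w - j.+1)); rewrite (_ : a * P * b = b * P * a) //; by rewrite [RHS]mulrC [b * P]mulrC mulrA.
Qed.

Lemma Wc_cat d w1 y w2 : fv y != 0 -> Wc d (rcons w1 y) -> Wc d (y :: w2) ->
  Wc d (w1 ++ y :: w2).
Proof.
move=> ny H1 H2 i j /andP[ij jw] ni nj hl.
move Hp : (size w1) => p.
have A k : (k <= p)%N -> nth d (w1 ++ y :: w2) k = nth d (rcons w1 y) k.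
  by move=> kp; rewrite -cat_rcons nth_cat size_rcons Hp ltnS kp.
have B k : nth d (w1 ++ y :: w2) (p + k) = nth d (y :: w2) k.
  by rewrite nth_cat Hp ltnNge leq_addr /= addKn.
have Y : nth d (w1 ++ y :: w2) p = y by rewrite -[p]addn0 B.
case: (leqP j p) => jp.
  rewrite (eq_big_nat _ _ (F2 := fun k => sgn M (nth d (rcons w1 y) k) (nth d (rcons w1 y) k.+1))); last first.
    by move=> k /andP[_ kj]; rewrite !A //; timeout 20 lia.
  rewrite !A // in ni nj *; try timeout 20 lia.
  apply: H1 => //; first by rewrite size_rcons Hp; timeout 20 lia.
  by move=> l /andP[il lj]; rewrite -A; [apply: hl; timeout 20 lia | timeout 20 lia].
case: (leqP p i) => pi; last first.
  by move: (hl p); rewrite Y => /(_ ltac:(timeout 20 lia)) /eqP; rewrite (negbTE ny).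
have [i' Ei] : exists i', i = (p + i')%N by exists (i - p)%N; timeout 20 lia.
have [j' Ej] : exists j', j = (p + j')%N by exists (j - p)%N; timeout 20 lia.
subst i j.
rewrite [(p + i')%N]addnC big_addn.
have -> : (p + j' - p = j')%N by timeout 20 lia.
rewrite (eq_big_nat _ _ (F2 := fun k => sgn M (nth d (y :: w2) k) (nth d (y :: w2) k.+1))); last first.
  by move=> k _; rewrite addnC -addnS !B.
rewrite addnC !B.
rewrite !B in ni nj.
apply: H2 => //.
  by move: jw; rewrite size_cat /= Hp; timeout 20 lia.
move=> l /andP[il lj]; rewrite -B; apply: hl; timeout 20 lia.
Qed.

Lemma Wconn_sym x y : W_conn M f x y -> W_conn M f y x.
Proof.
case=> s [[/andP[s0 ps] wc] ly].
have E : y :: rev (belast x s) = rev (x :: s) by rewrite [x :: s]lastI rev_rcons ly.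
exists (rev (belast x s)); split; last first.
  by rewrite -[last y _]/(last y (y :: rev (belast x s))) E rev_cons last_rcons.
split.
  rewrite /is_walk size_rev size_belast s0 /= -ly rev_path.
  by rewrite (@eq_path _ _ (adj M)) // => a b; exact: adj_sym.
by rewrite WcE E; apply: Wc_rev; apply: (@Wc_def x); exact: wc.
Qed.

Lemma Wconn_trans x y z : fv y != 0 -> W_conn M f x y -> W_conn M f y z -> W_conn M f x z.
Proof.
move=> ny [s1 [[/andP[s10 p1] w1] l1]] [s2 [[/andP[_ p2] w2] l2]].
exists (s1 ++ s2); split; last by rewrite last_cat l1.
split.
  by rewrite /is_walk size_cat (leq_trans s10 (leq_addr _ _)) cat_path p1 l1 p2.
have E : x :: s1 ++ s2 = belast x s1 ++ y :: s2 by rewrite -cat_cons lastI l1 cat_rcons.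
rewrite WcE E; apply: Wc_cat => //.
  by rewrite -l1 -lastI.
exact: Wc_def w2.
Qed.

Local Notation K := (W_class M f).

Lemma K_self x : fv x != 0 -> x \in K x.
Proof. by move=> nx; rewrite inE nx; apply/asboolP; left. Qed.

Lemma K_mem x y : y \in K x -> fv y != 0 /\ (y = x \/ W_conn M f x y).
Proof. by rewrite inE => /andP[ny /asboolP]. Qed.

Lemma K_eq x y : fv x != 0 -> fv y != 0 -> W_conn M f x y -> K x = K y.
Proof.
move=> nx ny cxy; apply/setP => z; rewrite !inE.
apply/andP/andP => -[nz /asboolP H]; split => //; apply/asboolP; right.
  case: H => [->|cxz]; first exact: Wconn_sym.
  exact: Wconn_trans nx (Wconn_sym cxy) cxz.
case: H => [->//|cyz].
exact: Wconn_trans ny cxy cyz.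
Qed.

Lemma K_in x y : fv x != 0 -> y \in K x -> K x = K y.
Proof.
move=> nx /K_mem [ny [->//|cxy]]; exact: K_eq.
Qed.

Lemma wd_mem x w : fv x != 0 -> fv w != 0 ->
  (x \in weak_domain M f (K w)) = (K w == K x).
Proof.
move=> nx nw; apply/idP/eqP.
  rewrite inE => /orP[xK|]; first exact: K_in.
  rewrite inE => /asboolP [y [yK cxy]].
  have [ny _] := K_mem yK.
  by rewrite (K_in nw yK) (K_eq nx ny cxy).
by move=> E; rewrite inE E K_self.
Qed.

Lemma g_val (a : {set 'I_n} -> R) x :
  (\sum_(W in W_classes M f) a W *: restr f (weak_domain M f W)) x 0 = a (K x) * f x 0.
Proof.
rewrite summxE.
case: (boolP (fv x == 0)) => [/eqP fx0|nx].
  rewrite /Defs.fv in fx0; rewrite fx0 mulr0 big1 // => W _.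
  by rewrite !mxE fx0; case: ifP; rewrite mulr0.
rewrite (bigD1 (K x)) /=; last by apply/imsetP; exists x; rewrite ?inE.
rewrite !mxE (wd_mem nx nx) eqxx big1 ?addr0 // => W /andP[/imsetP[w wO ->] neq].
rewrite inE in wO.
by rewrite !mxE (wd_mem nx wO) (negbTE neq) mulr0.
Qed.

Fixpoint sp (x : 'I_n) (s : seq 'I_n) : R :=
  if s is y :: s' then sgn M x y * sp y s' else 1.

Lemma prod_sp d x s :
  \prod_(0 <= k < size s) sgn M (nth d (x :: s) k) (nth d (x :: s) k.+1) = sp x s.
Proof.
elim: s x => [|y s IH] x /=; first by rewrite big_geq.
by rewrite big_nat_recl //= -IH.
Qed.

Lemma sgnE x y : sgn M x y = - (M x y) * `|M x y|^-1.
Proof. by rewrite /sgn mulNr. Qed.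

Lemma sgn_neq0 x y : M x y != 0 -> sgn M x y != 0.
Proof.
by move=> h; rewrite sgnE mulf_neq0 ?oppr_eq0 ?invr_eq0 ?normr_eq0.
Qed.

Lemma sp_neq0 x s : path (adj M) x s -> sp x s != 0.
Proof.
elim: s x => [|y s IH] x /=; first by rewrite oner_neq0.
case/andP => /andP[_ hM] ps; rewrite mulf_neq0 //; [exact: sgn_neq0 | exact: IH].
Qed.

Lemma ZW x zs y : fv x != 0 -> fv y != 0 -> all (fun z => fv z == 0) zs ->
  path (adj M) x (rcons zs y) -> 0 < fv x * sp x (rcons zs y) * fv y -> W_conn M f x y.
Proof.
move=> nx ny zz pth pos.
exists (rcons zs y); split; last by rewrite last_rcons.
split; first by rewrite /is_walk size_rcons pth.
have Z0 k : (0 < k <= size zs)%N -> fv (nth x (x :: rcons zs y) k) = 0.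
  case: k => // k /= ks; rewrite nth_rcons ks.
  by apply/eqP; move/allP: zz; apply; rewrite mem_nth.
have NY : nth x (x :: rcons zs y) (size zs).+1 = y by rewrite /= nth_rcons ltnn eqxx.
rewrite WcE => i j; rewrite /= size_rcons => /andP[ij jw] ni nj hl.
have i0 : i = 0%N.
  case: (posnP i) => // ip; move: ni; rewrite Z0 ?eqxx //; lia.
have j0 : j = (size zs).+1.
  case: (ltngtP j (size zs).+1) => // jl; last lia.
  by move: nj; rewrite Z0 ?eqxx //; lia.
subst i j; rewrite NY /=.
by rewrite -(size_rcons zs y) prod_sp.
Qed.

Section Main.
Variables (a : {set 'I_n} -> R) (lam m : R).
Hypothesis Hrow : forall x, \sum_j M x j * ((a (K j) - m) * fv j) = lam * ((a (K x) - m) * fv x).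
Hypothesis Hf : forall x, \sum_j M x j * fv j = lam * fv x.
Hypothesis hmax : forall y, fv y != 0 -> a (K y) <= m.

Definition P x := a (K x) = m.

Lemma W2 z x j : fv z = 0 -> fv x != 0 -> M z x != 0 -> fv j != 0 ->
  0 < (M z x * fv x) * (M z j * fv j) -> K x = K j.
Proof.
move=> fz nx hzx nj pos.
have hzj : M z j != 0 by apply: contraTneq pos => ->; rewrite mul0r mulr0 ltxx.
have xz : x != z by apply: contraNneq nx => ->; rewrite fz.
have zj : z != j by apply: contraNneq nj => <-; rewrite fz.
apply: (K_eq nx nj).
apply: (@ZW x [:: z] j nx nj); first by rewrite /= fz eqxx.
  by rewrite /= /adj hzj Msym' hzx xz zj.
rewrite /= !sgnE mulr1 Msym'.
have hp1 : 0 < `|M z x|^-1 by rewrite invr_gt0 normr_gt0.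
have hp2 : 0 < `|M z j|^-1 by rewrite invr_gt0 normr_gt0.
have -> : fv x * (- M z x * `|M z x|^-1 * (- M z j * `|M z j|^-1)) * fv j
   = ((M z x * fv x) * (M z j * fv j)) * (`|M z x|^-1 * `|M z j|^-1) by ring.
by rewrite mulr_gt0 // mulr_gt0.
Qed.

Lemma W1 x j : x != j -> fv x != 0 -> fv j != 0 -> fv x * (M x j * fv j) < 0 -> K x = K j.
Proof.
move=> xj nx nj neg.
have hxj : M x j != 0 by apply: contraTneq neg => ->; rewrite mul0r mulr0 ltxx.
apply: (K_eq nx nj); apply: (@ZW x [::] j nx nj) => //=.
  by rewrite /adj xj hxj.
rewrite sgnE mulr1.
have -> : fv x * (- M x j * `|M x j|^-1) * fv j = - (fv x * (M x j * fv j)) * `|M x j|^-1 by ring.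
by rewrite mulr_gt0 // ?oppr_gt0 // invr_gt0 normr_gt0.
Qed.

Lemma Zp z x y : fv z = 0 -> fv x != 0 -> P x -> M z x != 0 -> fv y != 0 -> M z y != 0 -> P y.
Proof.
move=> fz nx Px hzx ny hzy.
set c := M z x * fv x.
have e : \sum_j c * (M z j * ((a (K j) - m) * fv j)) = 0 by rewrite -mulr_sumr Hrow fz !mulr0.
have ge j : 0 <= c * (M z j * ((a (K j) - m) * fv j)).
  case: (boolP (fv j == 0)) => [/eqP ->|nj]; first by rewrite !mulr0.
  case: (ltrP 0 (c * (M z j * fv j))) => hc.
    by rewrite /P in Px; rewrite -(W2 fz nx hzx nj hc) Px subrr mul0r !mulr0.
  have -> : c * (M z j * ((a (K j) - m) * fv j)) = (c * (M z j * fv j)) * (a (K j) - m) by ring.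
  by rewrite mulr_le0 // subr_le0 hmax.
have := (@psumr_eq0P _ _ xpredT _ (fun j _ => ge j) e y isT).
case: (ltrP 0 (c * (M z y * fv y))) => hc.
  by move=> _; rewrite /P -(W2 fz nx hzx ny hc).
have hne : c * (M z y * fv y) != 0 by rewrite !mulf_neq0.
have -> : c * (M z y * ((a (K y) - m) * fv y)) = (c * (M z y * fv y)) * (a (K y) - m) by ring.
by move/eqP; rewrite mulf_eq0 (negbTE hne) subr_eq0 => /eqP.
Qed.

Lemma Ep x y : fv x != 0 -> P x -> fv y != 0 -> M x y != 0 -> x != y -> P y.
Proof.
move=> nx Px ny hxy xy.
set c := fv x.
have e : \sum_j - (c * (M x j * ((a (K j) - m) * fv j))) = 0.
  by rewrite sumrN -mulr_sumr Hrow Px subrr mul0r !mulr0 oppr0.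
have ge j : 0 <= - (c * (M x j * ((a (K j) - m) * fv j))).
  rewrite oppr_ge0.
  case: (boolP (fv j == 0)) => [/eqP ->|nj]; first by rewrite !mulr0.
  case: (eqVneq x j) => [<-|xj]; first by rewrite Px subrr mul0r !mulr0.
  case: (ltrP (c * (M x j * fv j)) 0) => hc.
    by rewrite -(W1 xj nx nj hc) Px subrr mul0r !mulr0.
  have -> : c * (M x j * ((a (K j) - m) * fv j)) = (c * (M x j * fv j)) * (a (K j) - m) by ring.
  by rewrite mulr_ge0_le0 // subr_le0 hmax.
have := (@psumr_eq0P _ _ xpredT _ (fun j _ => ge j) e y isT).
case: (ltrP (c * (M x y * fv y)) 0) => hc.
  by move=> _; rewrite /P -(W1 xy nx ny hc).
have hne : c * (M x y * fv y) != 0 by rewrite !mulf_neq0.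
have -> : c * (M x y * ((a (K y) - m) * fv y)) = (c * (M x y * fv y)) * (a (K y) - m) by ring.
by move/eqP; rewrite oppr_eq0 mulf_eq0 (negbTE hne) subr_eq0 => /eqP.
Qed.

Lemma Lp z x zs y : fv z = 0 -> fv x != 0 -> P x -> M z x != 0 ->
  all (fun z => fv z == 0) zs -> fv y != 0 -> path (adj M) z (rcons zs y) -> P y.
Proof.
move=> fz nx Px hzx zz ny pth.
set c := M z x * fv x.
have hc0 : c != 0 by rewrite mulf_neq0.
have [x' hx'] : exists x', c * (M z x' * fv x') < 0.
  case: (boolP [exists x', c * (M z x' * fv x') < 0]) => [/existsP//|/existsPn H].
  exfalso.
  have e : \sum_j c * (M z j * fv j) = 0 by rewrite -mulr_sumr Hf fz !mulr0.
  have ge j : 0 <= c * (M z j * fv j) by rewrite leNgt H.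
  have := (@psumr_eq0P _ _ xpredT _ (fun j _ => ge j) e x isT).
  by rewrite -/c => /eqP; rewrite mulf_eq0 (negbTE hc0).
have [hzx' nx'] : M z x' != 0 /\ fv x' != 0.
  move: (hx'); rewrite lt_neqAle => /andP[hne _]; move: hne.
  by rewrite !mulf_eq0 !negb_or => /and3P[_ -> ->].
have Px' : P x' := Zp fz nx Px hzx nx' hzx'.
set D := sp z (rcons zs y) * fv y.
have hD : D != 0 by rewrite mulf_neq0 // sp_neq0.
have key u : fv u != 0 -> M z u != 0 -> (M z u * fv u) * D < 0 -> K u = K y.
  move=> nu hzu neg.
  have uz : u != z by apply: contraNneq nu => ->; rewrite fz.
  apply: (K_eq nu ny); apply: (@ZW u (z :: zs) y) => //=.
  - by rewrite fz eqxx zz.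
  - by rewrite pth andbT /adj uz Msym' hzu.
  rewrite sgnE Msym'.
  have -> : fv u * (- M z u * `|M z u|^-1 * sp z (rcons zs y)) * fv y
     = - ((M z u * fv u) * D) * `|M z u|^-1 by rewrite /D; ring.
  by rewrite mulr_gt0 // ?oppr_gt0 // invr_gt0 normr_gt0.
case: (ltrP (c * D) 0) => h1.
  by rewrite /P -(key x nx hzx h1).
case: (ltrP ((M z x' * fv x') * D) 0) => h2.
  by rewrite /P -(key x' nx' hzx' h2).
have hDD : 0 < D * D by rewrite -expr2 exprn_even_gt0.
have E : (c * D) * ((M z x' * fv x') * D) = (c * (M z x' * fv x')) * (D * D) by ring.
have : (c * (M z x' * fv x')) * (D * D) < 0 by rewrite pmulr_llt0.
by rewrite -E ltNge mulr_ge0.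
Qed.

Lemma Sp x zs y : fv x != 0 -> P x -> all (fun z => fv z == 0) zs -> fv y != 0 ->
  path (adj M) x (rcons zs y) -> P y.
Proof.
move=> nx Px; case: zs => [|z zs] /= zz ny.
  by rewrite andbT /adj => /andP[xy hxy]; exact: Ep nx Px ny hxy xy.
case/andP: zz => /eqP fz zz; case/andP => /andP[xz hxz] pth.
by apply: (Lp fz nx Px _ zz ny pth); rewrite Msym'.
Qed.

Lemma Ip p : forall x zs, fv x != 0 -> P x -> all (fun z => fv z == 0) zs ->
  path (adj M) x (zs ++ p) -> forall y, y \in p -> fv y != 0 -> P y.
Proof.
elim: p => [|v p IH] x zs nx Px zz pth y //.
rewrite -cat_rcons cat_path last_rcons in pth; case/andP: pth => p1 p2.
rewrite inE => /orP[/eqP ->|yp] ny; first exact: Sp nx Px zz ny p1.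
case: (boolP (fv v == 0)) => nv.
  apply: (IH x (rcons zs v) nx Px _ _ y yp ny); first by rewrite all_rcons nv zz.
  by rewrite cat_path last_rcons p1 p2.
exact: (IH v [::] nv (Sp nx Px zz nv p1) isT p2 y yp ny).
Qed.

End Main.
Lemma final (a : {set 'I_n} -> R) lam :
  (forall x y : 'I_n, connect (adj M) x y) ->
  eigenfunction M lam f ->
  eigenfunction M lam
    (\sum_(W in W_classes M f) a W *: restr f (weak_domain M f W)) ->
  forall W1 W2, W1 \in W_classes M f -> W2 \in W_classes M f -> a W1 = a W2.
Proof.
move=> conn [fnz Hf0] [_ Hg0] W1 W2 /imsetP[w1 w1O ->] /imsetP[w2 w2O ->].
rewrite !inE in w1O w2O.
have Hf x : \sum_j M x j * fv j = lam * fv x.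
  by have := congr1 (fun A : 'M[R]_(n,1) => A x 0) Hf0; rewrite !mxE.
have Hg x : \sum_j M x j * (a (K j) * fv j) = lam * (a (K x) * fv x).
  rewrite /Defs.fv; under eq_bigr => j _ do rewrite -(g_val a j).
  rewrite -(g_val a x).
  by have := congr1 (fun A : 'M[R]_(n,1) => A x 0) Hg0; rewrite !mxE.
have [x0 nx0] : exists x, fv x != 0.
  case: (boolP [exists x, fv x != 0]) => [/existsP//|/existsPn H].
  case/eqP: fnz; apply/matrixP => i j; rewrite ord1 !mxE.
  by move: (H i); rewrite negbK => /eqP.
case: (@arg_maxP _ _ _ x0 (fun i => fv i != 0) (fun i => a (K i)) nx0) => xm nxm maxm.
set m := a (K xm).
have Hrow x : \sum_j M x j * ((a (K j) - m) * fv j) = lam * ((a (K x) - m) * fv x).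
  transitivity (\sum_j M x j * (a (K j) * fv j) - m * \sum_j M x j * fv j).
    by rewrite mulr_sumr -sumrB; apply: eq_bigr => j _; ring.
  by rewrite Hg Hf; ring.
have hmax y : fv y != 0 -> a (K y) <= m by move=> ny; exact: maxm.
have hall y : fv y != 0 -> a (K y) = m.
  move=> ny; case: (eqVneq y xm) => [->//|yx].
  have /connectP [p pth ly] := conn xm y.
  have := @Ip _ _ _ Hrow Hf hmax p xm [::] nxm erefl isT pth y. apply => //.

  by move: (mem_last xm p); rewrite -ly inE (negbTE yx).
by rewrite (hall _ w1O) (hall _ w2O).
Qed.

End S.

Theorem lemma4p4 (R : realType) (n : nat) (M : 'M[R]_n) (lam : R)
  (f : 'cV[R]_n) (a : {set 'I_n} -> R) :
  M^T = M ->
  (forall x y : 'I_n, connect (adj M) x y) ->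
  eigenfunction M lam f ->
  eigenfunction M lam
    (\sum_(W in W_classes M f) a W *: restr f (weak_domain M f W)) ->
  forall W1 W2, W1 \in W_classes M f -> W2 \in W_classes M f -> a W1 = a W2.
Proof.
move=> Msym conn ef eg; exact: (@final R n M f Msym a lam conn ef eg).
Qed.
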